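(* Let $0<\eta<1$, $I=[\eta,1]$, and $\mathcal{D}$ as in the context. For every $1\le p\le\infty$ there are constants $C,C_6>0$ independent of $n$ such that $\varepsilon_n(B_1(\mathcal{D}))_{L^p(I)}\le Ce^{-C_6n^{1/2}}$ for all $n\ge1$.
   Context: Dictionary: for $b\in(0,\infty)$ let $g(x,b)=\frac{\eta+b}{x+b}$ on $I$, and $\mathcal{D}=\{g(\cdot,b):b\in(0,\infty)\}$. $B_1(\mathcal{D})$ is the closure in $L^p(I)$ of $\{\sum_{j=1}^m c_jg_j: m\in\mathbb{N}, g_j\in\mathcal{D}, \sum_j|c_j|\le1\}$. Entropy numbers: $\varepsilon_n(F)_X=\inf\{\varepsilon>0: F\text{ is covered by }2^n\text{ balls of radius }\varepsilon\text{ in }X\}$. *)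

(* Defs.v *)
From HB Require Import structures.
From mathcomp Require Import all_boot all_order all_algebra.
From mathcomp Require Import all_classical all_reals all_analysis.
Set Implicit Arguments. Unset Strict Implicit. Unset Printing Implicit Defensive.
Import Order.TTheory GRing.Theory Num.Theory.
Import numFieldNormedType.Exports.
Local Open Scope classical_set_scope.
Local Open Scope ring_scope.

Definition Iset {R : realType} (eta : R) : set R := `[eta, 1%R].

Definition LpI_dist {R : realType} (p : \bar R) (eta : R) (f g : R -> R) : \bar R :=
  Lnorm (@lebesgue_measure R) p (fun x => ((f x - g x) * \1_(Iset eta) x)%:E).

Definition LpI {R : realType} (p : \bar R) (eta : R) : set (R -> R) :=
  [set f | measurable_fun (Iset eta) f /\
           (LpI_dist p eta f (fun _ => 0%R) < +oo)%E].

Definition gdict {R : realType} (eta : R) (b x : R) : R := (eta + b) / (x + b).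

Definition absconv_dict {R : realType} (eta : R) : set (R -> R) :=
  [set f | exists (m : nat) (c b : 'I_m -> R),
     (forall j, 0 < b j) /\ \sum_(j < m) `|c j| <= 1 /\
     f = (fun x => \sum_(j < m) c j * gdict eta (b j) x)].

Definition LpI_closure {R : realType} (p : \bar R) (eta : R) (S : set (R -> R))
  : set (R -> R) :=
  [set f | f \in LpI p eta /\
     forall e : R, 0 < e -> exists2 h, S h & (LpI_dist p eta f h < e%:E)%E].

Definition B1D {R : realType} (p : \bar R) (eta : R) : set (R -> R) :=
  LpI_closure p eta (absconv_dict eta).

Definition covered_by {R : realType} (p : \bar R) (eta : R) (F : set (R -> R))
  (n : nat) (e : R) : Prop :=
  exists c : 'I_(2 ^ n) -> (R -> R),
    (forall i, c i \in LpI p eta) /\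
    forall f, F f -> exists i, (LpI_dist p eta f (c i) <= e%:E)%E.

Definition entropy_number {R : realType} (p : \bar R) (eta : R)
  (F : set (R -> R)) (n : nat) : \bar R :=
  ereal_inf [set e%:E | e in [set e : R | 0 < e /\ covered_by p eta F n e]].

(* Main.v *)
Require Import Defs.
Set Warnings "-all".
From HB Require Import structures.
From mathcomp Require Import all_boot all_order all_algebra.
From mathcomp Require Import all_classical all_reals all_analysis.
From mathcomp Require Import ring lra zify measurable_realfun ess_sup_inf.
Import Order.TTheory GRing.Theory Num.Theory.
Import numFieldNormedType.Exports.
Local Open Scope classical_set_scope.
Local Open Scope ring_scope.
Lemma measurable_Iset {R : realType} (eta : R) : measurable (Iset eta).
Proof. exact: measurable_itv. Qed.

Lemma LpI_dist_le (R : realType) (eta : R) (p : \bar R) (f g : R -> R) (M : R) :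
  0 < eta -> eta < 1 -> (1%:E <= p)%E -> 0 <= M ->
  measurable_fun setT (fun x => (f x - g x) * \1_(Iset eta) x) ->
  (forall x, Iset eta x -> `|f x - g x| <= M) ->
  (LpI_dist p eta f g <= M%:E)%E.
Proof.
move=> e0 e1 p1 M0 mu hb.
set u := fun x => (f x - g x) * \1_(Iset eta) x.
have ub : forall x, `|u x| <= M * \1_(Iset eta) x.
  move=> x; rewrite /u /indic; case: (boolP (x \in Iset eta)).
    by rewrite inE => xi; rewrite !mulr1; apply: hb.
  by rewrite !mulr0 normr0.
rewrite /LpI_dist unlock.
case: p p1 => [r|_|//].
- rewrite lee_fin => r1.
  have r0 : 0 < r by apply: lt_le_trans r1.
  have H : (\int[lebesgue_measure]_x (`|(u x)%:E| `^ r) <= (M `^ r)%:E)%E.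
    apply: (@le_trans _ _ (\int[lebesgue_measure]_x ((M `^ r) * \1_(Iset eta) x)%:E)%E).
      apply: ge0_le_integral => //.
      + by move=> x _; exact: poweR_ge0.
      + apply: (@measurableT_comp _ _ _ _ _ _ (poweR ^~ r)%E _ (abse \o (EFin \o u))%E).
          exact: measurable_poweR.
        apply: measurableT_comp => //.
        by apply/measurable_EFinP.
      + apply/measurable_EFinP; apply: measurable_funM => //.
        by apply: measurable_indic; apply: measurable_itv.
      + move=> x _; rewrite abse_EFin poweR_EFin lee_fin.
        rewrite /indic; case: (boolP (x \in Iset eta)) => xi.
          rewrite mulr1; apply: (ge0_ler_powR (ltW r0)); rewrite ?nnegrE ?normr_ge0 //.
          by have := ub x; rewrite /indic xi mulr1.
        have := ub x; rewrite /indic (negbTE xi) !mulr0 normr_le0 => /eqP ->.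
        by rewrite normr0 powR0 ?gt_eqF.
    rewrite (@integralZl_indic _ _ _ lebesgue_measure setT measurableT (fun _ => Iset eta) (M `^ r)); last 2 first.
      - by move=> k; have := powR_ge0 M r; rewrite leNgt k.
      - exact: measurable_Iset.
    rewrite integral_indic ?setIT; last exact: measurable_Iset.
    rewrite [X in (_ * X <= _)%E](_ : _ = (1 - eta)%:E); last first.
      have := lebesgue_measure_itv `[eta, 1%R]; rewrite /= lte_fin e1 -EFinB.
      by move=> <-.
    rewrite -EFinM lee_fin.
    by rewrite ler_piMr ?powR_ge0 // lerBlDr lerDl ltW.
  all: try exact: measurableT.
  apply: (@le_trans _ _ ((M `^ r)%:E `^ r^-1)%E).
    apply: gt0_ler_poweR => //; first by rewrite invr_ge0 ltW.
      rewrite in_itv /= integral_ge0 //= ?leey // => x _; exact: poweR_ge0.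
    by rewrite in_itv /= lee_fin powR_ge0 leey.
  by rewrite poweR_EFin -powRrM mulfV ?gt_eqF // powRr1.
- case: ifPn => // _.
  apply/ess_supP; apply: nearW => x /=.
  rewrite lee_fin (le_trans (ub x)) //.
  by rewrite /indic; case: (_ \in _); rewrite ?mulr1 ?mulr0.
Qed.
Section Approx.
Variable R : realType.
Variable eta : R.
Hypothesis e0 : 0 < eta.
Hypothesis e1 : eta < 1.
Ltac hy := have E0 := e0; have E1 := e1.

Definition x0 : R := (1 + eta) / 2.
Definition dd : R := (1 - eta) / 2.
Definition qq : R := (1 - eta) / (1 + eta).
Definition tt (x : R) : R := (x - x0) / dd.
Definition acoef (b : R) (k : nat) : R := (eta + b) / (x0 + b) * (- (dd / (x0 + b))) ^+ k.

Lemma x0_gt0 : 0 < x0. Proof. hy; rewrite /x0; lra. Qed.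
Lemma dd_gt0 : 0 < dd. Proof. hy; rewrite /dd; lra. Qed.
Lemma qq_ge0 : 0 <= qq. Proof. hy; rewrite /qq divr_ge0 //; lra. Qed.
Lemma qq_lt1 : qq < 1. Proof. hy; rewrite /qq ltr_pdivrMr ?mul1r; lra. Qed.
Lemma qqE : qq = dd / x0.
Proof. hy; rewrite /qq /dd /x0; field; lra. Qed.

Lemma tt_le1 x : Iset eta x -> `|tt x| <= 1.
Proof.
hy; rewrite /Iset /= in_itv /= => /andP[h1 h2].
rewrite /tt normrM normfV (gtr0_norm dd_gt0) ler_pdivrMr ?dd_gt0 // mul1r.
rewrite /dd /x0 ler_norml; apply/andP; split; lra.
Qed.

Lemma acoef_le1 b k : 0 < b -> `|acoef b k| <= 1.
Proof.
hy; move=> b0; have hx := x0_gt0; have hd := dd_gt0.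
rewrite /acoef normrM normrX normrN.
rewrite -[1]mul1r; apply: ler_pM => //.
- rewrite ger0_norm ?divr_ge0 //; try lra.
  rewrite ler_pdivrMr; try lra. rewrite /x0; lra.
- apply: exprn_ile1 => //; rewrite ger0_norm ?divr_ge0 //; try lra.
  rewrite ler_pdivrMr; try lra. rewrite /x0 /dd; lra.
Qed.

Lemma gdict_approx b x K : 0 < b -> Iset eta x ->
  `|gdict eta b x - \sum_(k < K) acoef b k * tt x ^+ k| <= qq ^+ K / (1 - qq).
Proof.
hy; move=> b0 xI; have hx := x0_gt0; have hd := dd_gt0.
have xI' := xI; rewrite /Iset /= in_itv /= in xI'; case/andP: xI' => h1 h2.
have hxb : 0 < x0 + b by lra.
have hxb' : 0 < x + b by lra.
set w := (x - x0) / (x0 + b).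
have hw : `|w| <= qq.
  rewrite /w normrM normfV (gtr0_norm (_ : 0 < x0 + b)); last lra.
  rewrite ler_pdivrMr; last lra.
  have hxx : `|x - x0| <= dd by rewrite /dd /x0 ler_norml; apply/andP; split; lra.
  have hp : 0 <= dd / x0 * b by apply: mulr_ge0; [apply: divr_ge0|]; apply: ltW.
  rewrite qqE (_ : dd / x0 * (x0 + b) = dd + dd / x0 * b); last by field; rewrite gt_eqF.
  lra.
have q1 := qq_lt1; have q0 := qq_ge0.
have w1 : 0 < 1 + w.
  have := ler_norml w qq; rewrite hw => /esym /andP [+ _]; lra.
have hsum : \sum_(k < K) acoef b k * tt x ^+ k =
    (eta + b) / (x0 + b) * \sum_(k < K) (- w) ^+ k.
  rewrite mulr_sumr; apply: eq_bigr => k _.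
  rewrite /acoef /tt -mulrA -exprMn; congr (_ * _ ^+ _).
  by rewrite /w; field; rewrite !gt_eqF.
have hg : gdict eta b x = (eta + b) / (x0 + b) / (1 + w).
  rewrite /gdict /w; field.
  by rewrite !gt_eqF // (_ : x0 + b + (x - x0) = x + b) //; ring.
have hgeo : \sum_(k < K) (- w) ^+ k = (1 - (- w) ^+ K) / (1 + w).
  apply: (@mulIf _ (1 + w)); first by rewrite gt_eqF.
  rewrite mulfVK ?gt_eqF //.
  have := subrX1 (- w) K; rewrite mulrC => H.
  have -> : 1 + w = - (- w - 1) by ring.
  by rewrite mulrN -H; ring.
rewrite hsum hg hgeo.
set A := (eta + b) / (x0 + b).
have hA : `|A| <= 1.
  rewrite /A ger0_norm ?divr_ge0 //; try lra.
  rewrite ler_pdivrMr; try lra. rewrite /x0; lra.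
rewrite (_ : A / (1 + w) - A * ((1 - (- w) ^+ K) / (1 + w)) = A * (- w) ^+ K / (1 + w));
  last by field; rewrite gt_eqF.
rewrite normrM normfV normrM normrX normrN (gtr0_norm w1).
have hwK : `|w| ^+ K <= qq ^+ K by apply: lerXn2r; rewrite ?nnegrE.
have h1w : (1 + w)^-1 <= (1 - qq)^-1.
  rewrite lef_pV2 ?posrE; try lra.
  have := ler_norml w qq; rewrite hw => /esym /andP [+ _]; lra.
rewrite -[_ / (1 - qq)]mul1r mulrA.
apply: ler_pM => //; first by rewrite invr_ge0 ltW.
by apply: ler_pM.
Qed.

Lemma absconv_approx K h : absconv_dict eta h ->
  exists beta : 'I_K -> R, (forall k, `|beta k| <= 1) /\
    forall x, Iset eta x ->
      `|h x - \sum_(k < K) beta k * tt x ^+ k| <= qq ^+ K / (1 - qq).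
Proof.
case=> m [c [b [hb [hc ->]]]].
exists (fun k => \sum_(j < m) c j * acoef (b j) k); split.
  move=> k; apply: le_trans (ler_norm_sum _ _ _) _.
  apply: le_trans hc; apply: ler_sum => j _.
  rewrite normrM -[X in _ <= X]mulr1; apply: ler_wpM2l => //.
  exact: acoef_le1.
move=> x xI.
have -> : \sum_(k < K) (\sum_(j < m) c j * acoef (b j) k) * tt x ^+ k =
    \sum_(j < m) c j * \sum_(k < K) acoef (b j) k * tt x ^+ k.
  under eq_bigr do rewrite big_distrl /=.
  rewrite exchange_big /=; apply: eq_bigr => j _.
  by rewrite mulr_sumr; apply: eq_bigr => k _; rewrite mulrA.
rewrite -sumrB.
under eq_bigr do rewrite -mulrBr.
apply: le_trans (ler_norm_sum _ _ _) _.
apply: (@le_trans _ _ (\sum_(j < m) `|c j| * (qq ^+ K / (1 - qq)))).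
  apply: ler_sum => j _; rewrite normrM; apply: ler_wpM2l => //.
  exact: gdict_approx.
rewrite -big_distrl /= -[X in _ <= X]mul1r; apply: ler_wpM2r => //.
by rewrite divr_ge0 ?exprn_ge0 ?qq_ge0 // subr_ge0 ltW // qq_lt1.
Qed.

End Approx.

Definition vv {R : realType} (B : nat) (d : nat) : R := -1 + 2 * d%:R / B%:R.

Lemma quantize (R : realType) (B : nat) (beta : R) : (0 < B)%N -> `|beta| <= 1 ->
  exists d : 'I_B, `|beta - vv B d| <= 2 / B%:R.
Proof.
move=> B0 hb.
have hB : 0 < (B%:R : R) by rewrite ltr0n.
have hb' := hb; rewrite ler_norml in hb'; case/andP: hb' => hb1 hb2.
set y := (beta + 1) * B%:R / 2.
have y0 : 0 <= y by rewrite /y divr_ge0 // mulr_ge0 //; lra.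
have yB : y <= B%:R.
  rewrite /y ler_pdivrMr //; rewrite mulrC; apply: ler_wpM2l; lra.
have := Num.Theory.truncn_itv y0; set n := Num.truncn y => /andP[ny yn].
have dlt : (minn n B.-1 < B)%N by rewrite gtn_min; apply/orP; right; rewrite prednK // ?ltnSn.
exists (Ordinal dlt) => /=.
have hd : 0 <= y - (minn n B.-1)%:R <= 1.
  case: (leqP n B.-1) => hn.
    apply/andP; split; first lra.
    move: yn; rewrite -natr1; lra.
  apply/andP; split.
    rewrite subr_ge0; apply: le_trans ny; rewrite ler_nat; exact: ltnW.
  have : (B.-1%:R : R) + 1 = B%:R by rewrite natr1 prednK.
  lra.
have -> : beta - vv B (minn n B.-1) = 2 * (y - (minn n B.-1)%:R) / B%:R.
  by rewrite /vv /y; field; rewrite gt_eqF.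
rewrite normrM normfV (gtr0_norm hB) ler_pdivrMr // divfK ?gt_eqF //.
case/andP: hd => hd1 hd2; rewrite ger0_norm; [lra|].
by apply: mulr_ge0.
Qed.


Lemma cover_fin (X : Type) (T : finType) (n : nat) (F : T -> X) (t0 : T) :
  (#|T| <= 2 ^ n)%N ->
  forall t, exists i : 'I_(2 ^ n), F (nth t0 (enum T) i) = F t.
Proof.
move=> hT t.
have hi : (index t (enum T) < 2 ^ n)%N.
  apply: leq_trans hT; rewrite cardE index_mem; exact: mem_enum.
by exists (Ordinal hi) => /=; rewrite nth_index // mem_enum.
Qed.

Lemma measurable_restrI (R : realType) (eta : R) (F : R -> R) :
  measurable_fun (Iset eta) F ->
  measurable_fun setT (fun x => F x * \1_(Iset eta) x).
Proof.
move=> mF.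
have := (measurable_restrictT F (measurable_Iset eta)).1 mF.
apply: eq_measurable_fun => x _.
by rewrite /patch /indic; case: (x \in Iset eta); rewrite ?mulr1 ?mulr0.
Qed.

Lemma measurable_gdict (R : realType) (eta b : R) : 0 < eta -> 0 < b ->
  measurable_fun (Iset eta) (gdict eta b).
Proof.
move=> e0 b0.
apply: (@eq_measurable_fun _ _ _ _ (Iset eta) (fun x => (eta + b) / (Num.max x eta + b))).
  2: apply: nonincreasing_measurable.
  move=> x; rewrite inE /Iset /= in_itv /= => /andP[h1 _].
  by rewrite /gdict max_l.
  exact: measurable_Iset.
move=> s t st.
have hs : 0 < Num.max s eta + b.
  apply: (@lt_le_trans _ _ (eta + b)); first lra.
  by rewrite lerD2r le_max lexx orbT.
have ht : 0 < Num.max t eta + b.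
  apply: (@lt_le_trans _ _ (eta + b)); first lra.
  by rewrite lerD2r le_max lexx orbT.
apply: ler_wpM2l; first lra.
rewrite lef_pV2 ?posrE //.
by rewrite lerD2r le_max2.
Qed.

Lemma measurable_absconv (R : realType) (eta : R) (h : R -> R) : 0 < eta ->
  absconv_dict eta h -> measurable_fun (Iset eta) h.
Proof.
move=> e0; case=> m [c [b [hb [_ ->]]]].
apply: measurable_sum => j; apply: measurable_funM.
  exact: measurable_cst.
exact: measurable_gdict.
Qed.

Definition Pc (R : realType) (eta : R) (K B : nat) (e : {ffun 'I_K -> 'I_B}) : R -> R :=
  fun x => \sum_(k < K) vv B (e k) * tt R eta x ^+ k.

Lemma measurable_Pc (R : realType) (eta : R) K B e :
  measurable_fun setT (@Pc R eta K B e).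
Proof.
apply: measurable_sum => k; apply: measurable_funM; first exact: measurable_cst.
apply: measurable_funX; apply: measurable_funM; last exact: measurable_cst.
apply: measurable_funB => //; exact: measurable_cst.
Qed.

Lemma vv_le1 (R : realType) (B : nat) (d : 'I_B) : `|vv B d : R| <= 1.
Proof.
have B0 : (0 < B)%N by apply: leq_ltn_trans (ltn_ord d).
have hB : 0 < (B%:R : R) by rewrite ltr0n.
have hd : (d%:R : R) <= B%:R by rewrite ler_nat ltnW.
have hd0 : 0 <= (d%:R : R) by [].
rewrite /vv ler_norml; apply/andP; split.
  have : 0 <= 2 * d%:R / (B%:R : R) by rewrite divr_ge0 ?mulr_ge0.
  lra.
have : 2 * d%:R / (B%:R : R) <= 2.
  by rewrite ler_pdivrMr // ler_pM2l.
lra.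
Qed.

Lemma Pc_bound (R : realType) (eta : R) K B e x : 0 < eta -> eta < 1 ->
  Iset eta x -> `|@Pc R eta K B e x| <= K%:R.
Proof.
move=> e0 e1 xI; rewrite /Pc.
apply: le_trans (ler_norm_sum _ _ _) _.
apply: (@le_trans _ _ (\sum_(k < K) (1 : R))); last by rewrite sumr_const card_ord.
apply: ler_sum => k _; rewrite normrM normrX -[1 : R]mul1r.
apply: ler_pM => //; first exact: vv_le1.
apply: exprn_ile1 => //; exact: tt_le1.
Qed.

Lemma cover_main (R : realType) (eta : R) (p : \bar R) (K B n : nat) :
  0 < eta -> eta < 1 -> (1%:E <= p)%E -> (0 < B)%N -> (B ^ K <= 2 ^ n)%N ->
  Defs.covered_by p eta (B1D p eta) n
    (2 * (qq R eta ^+ K / (1 - qq R eta) + K%:R * (2 / B%:R))).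
Proof.
move=> e0 e1 p1 B0 hBK.
set del := qq R eta ^+ K / (1 - qq R eta) + K%:R * (2 / B%:R).
have q0 := @qq_ge0 R eta e0 e1; have q1 := @qq_lt1 R eta e0 e1.
have hB : 0 < (B%:R : R) by rewrite ltr0n.
have del0 : 0 < del.
  rewrite /del; apply: ltr_pwDl.
    have q0' : 0 < qq R eta by rewrite /qq divr_gt0 //; lra.
    by rewrite divr_gt0 ?exprn_gt0 // subr_gt0.
  by rewrite mulr_ge0 // divr_ge0 // ltW.
pose T := {ffun 'I_K -> 'I_B}.
pose t0 : T := [ffun=> Ordinal B0].
have hT : (#|T| <= 2 ^ n)%N by rewrite card_ffun !card_ord.
exists (fun i => @Pc R eta K B (nth t0 (enum T) i)); split.
  move=> i; rewrite inE; split.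
    apply: measurable_funTS; exact: measurable_Pc.
  apply: le_lt_trans (ltry (K%:R)).
  apply: LpI_dist_le => //.
    apply: measurable_funM; last by apply: measurable_indic; exact: measurable_Iset.
    apply: measurable_funB; [exact: measurable_Pc|exact: measurable_cst].
  by move=> x xI; rewrite subr0; apply: Pc_bound.
move=> f [fL Hf].
have [h hh hfh] := Hf del del0.
have [beta [hb1 hbx]] := @absconv_approx R eta e0 e1 K h hh.
have [u hu] := fin_all_exists (fun k => @quantize R B (beta k) B0 (hb1 k)).
pose e : T := [ffun k => u k].
have [i hi] := @cover_fin _ _ n (@Pc R eta K B) t0 hT e.
exists i; rewrite hi.
move: fL; rewrite inE => -[mf _].
have mh := @measurable_absconv R eta h e0 hh.
have hsup : forall x, Iset eta x -> `|h x - @Pc R eta K B e x| <= del.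
  move=> x xI.
  have -> : h x - @Pc R eta K B e x = (h x - \sum_(k < K) beta k * tt R eta x ^+ k)
      + \sum_(k < K) (beta k - vv B (e k)) * tt R eta x ^+ k.
    rewrite /Pc.
    under [X in _ = _ + X]eq_bigr do rewrite mulrBl.
    rewrite sumrB; ring.
  apply: le_trans (ler_normD _ _) _; apply: lerD; first exact: hbx.
  apply: le_trans (ler_norm_sum _ _ _) _.
  apply: (@le_trans _ _ (\sum_(k < K) (2 / B%:R : R))); last first.
    by rewrite sumr_const card_ord [X in _ <= X](mulr_natl (2 / B%:R) K).
  apply: ler_sum => k _; rewrite normrM normrX -[X in _ <= X]mulr1.
  apply: ler_pM => //; first by rewrite /e ffunE; exact: hu.
  apply: exprn_ile1 => //; exact: (@tt_le1 R eta e0 e1).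
have m1 := @measurable_restrI R eta _ (measurable_funB mf mh).
have m2 := @measurable_restrI R eta _ (measurable_funB mh (measurable_funTS (measurable_Pc R eta K B e))).
have hdist2 : (LpI_dist p eta h (@Pc R eta K B e) <= del%:E)%E.
  apply: LpI_dist_le => //; first exact: ltW.
have Hm : LpI_dist p eta f (@Pc R eta K B e) =
   Lnorm lebesgue_measure p (EFin \o ((fun x => (f x - h x) * \1_(Iset eta) x)
      \+ (fun x => (h x - @Pc R eta K B e x) * \1_(Iset eta) x))).
  by rewrite /LpI_dist; apply: eq_Lnorm => x /=; congr EFin; ring.
rewrite Hm.
have := @eminkowski _ _ R lebesgue_measure _ _ p m1 m2 p1.
move/le_trans; apply.
rewrite (_ : (2 * del)%:E = (del%:E + del%:E)%E); last by rewrite -EFinD; congr EFin; ring.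
apply: leeD; [exact: ltW hfh|exact: hdist2].
Qed.

Lemma sqrt_split (n : nat) : exists s, (2 * s * s <= n)%N /\ (n < 2 * s.+1 * s.+1)%N.
Proof.
elim: n => [|n [s [h1 h2]]]; first by exists 0%N.
case: (ltnP n.+1 (2 * s.+1 * s.+1)) => h.
  by exists s; split => //; apply: leqW.
exists s.+1; split; nia.
Qed.

Theorem corollary4p8 (R : realType) (eta : R) (p : \bar R) :
  0 < eta -> eta < 1 -> (1%:E <= p)%E ->
  exists C C6 : R, 0 < C /\ 0 < C6 /\
    forall n : nat, (1 <= n)%N ->
      (entropy_number p eta (B1D p eta) n
        <= (C * expR (- (C6 * Num.sqrt (n%:R))))%:E)%E.
Proof.
move=> e0 e1 p1.
have q0 := @qq_ge0 R eta e0 e1; have q1 := @qq_lt1 R eta e0 e1.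
set q := qq R eta in q0 q1 *.
set th := (3 + q) / 4.
have th0 : 0 < th by rewrite /th; lra.
have th1 : th < 1 by rewrite /th; lra.
have qth : q <= th by rewrite /th; lra.
have hth : 2^-1 <= th by rewrite /th; lra.
have lth : ln th < 0 by apply: ln_lt0; rewrite th0 th1.
set C0 := (1 - q)^-1 + 2.
have C00 : 0 < C0.
  have : 0 < (1 - q)^-1 by rewrite invr_gt0 subr_gt0.
  rewrite /C0; lra.
exists (2 * C0 / th), (- ln th / 2); split.
  by rewrite divr_gt0 // mulr_gt0.
split; first by lra.
move=> n n1.
have [s [hs1 hs2]] := sqrt_split n.
have B0 : (0 < 4 ^ s)%N by rewrite expn_gt0.
have hBK : ((4 ^ s) ^ s <= 2 ^ n)%N.
  by rewrite -expnM (_ : 4 = 2 ^ 2)%N // -expnM leq_exp2l // mulnA.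
have hc := @cover_main R eta p s (4 ^ s) n e0 e1 p1 B0 hBK.
set r := 2 * (q ^+ s / (1 - q) + s%:R * (2 / (4 ^ s)%:R)) in hc.
have r0 : 0 < r.
  rewrite /r mulr_gt0 //; apply: ltr_pwDl.
    have q0' : 0 < q by rewrite /q /qq divr_gt0 //; lra.
    by rewrite divr_gt0 ?exprn_gt0 // subr_gt0.
  by rewrite mulr_ge0 // divr_ge0 // ltW // ltr0n.
apply: (@le_trans _ _ r%:E).
  by apply: ereal_inf_lbound; exists r.
rewrite lee_fin.
have hb1 : q ^+ s <= th ^+ s by apply: lerXn2r; rewrite ?nnegrE // ltW.
have hb2 : (s%:R : R) * (2 / (4 ^ s)%:R) <= 2 * th ^+ s.
  have hs : (s%:R : R) <= 2 ^+ s by rewrite -natrX ler_nat ltnW // ltn_expl.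
  have h4 : ((4 ^ s)%:R : R) = 2 ^+ s * 2 ^+ s.
    by rewrite -exprMn natrX; congr (_ ^+ _); rewrite -natrM.
  have h2p : 0 < (2 : R) ^+ s by rewrite exprn_gt0.
  apply: (@le_trans _ _ (2 ^+ s * (2 / (4 ^ s)%:R))).
    by apply: ler_wpM2r => //; rewrite divr_ge0 // ltW // ltr0n.
  rewrite h4 (_ : 2 ^+ s * (2 / (2 ^+ s * 2 ^+ s)) = 2 * (2^-1) ^+ s); last first.
    by rewrite exprVn; field; rewrite gt_eqF.
  apply: ler_wpM2l => //; apply: lerXn2r => //; rewrite nnegrE //; lra.
have hr : r <= 2 * C0 * th ^+ s.
  rewrite /r /C0 -mulrA; apply: ler_wpM2l => //.
  rewrite (mulrDl ((1 - q)^-1) 2 (th ^+ s)); apply: lerD => //.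
  rewrite mulrC; apply: ler_wpM2l => //; rewrite invr_ge0 subr_ge0 ltW //.
apply: le_trans hr _.
have hsq : Num.sqrt (n%:R : R) <= 2 * s.+1%:R.
  have hn : (n%:R : R) <= (2 * s.+1%:R) ^+ 2.
    rewrite expr2 -!natrM ler_nat; apply: leq_trans (ltnW hs2) _.
    by rewrite leq_mul2l leq_pmull ?orbT.
  apply: le_trans (ler_wsqrtr hn) _.
  by rewrite sqrtr_sqr ger0_norm // mulr_ge0.
have hexp : th ^+ s.+1 <= expR (- (- ln th / 2 * Num.sqrt n%:R)).
  rewrite -[X in X ^+ _ <= _](lnK (_ : th \in Num.pos)); last by rewrite posrE.
  rewrite -expRM_natl ler_expR.
  rewrite -subr_ge0.
  rewrite (_ : - (- ln th / 2 * Num.sqrt n%:R) - s.+1%:R * ln th =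
     (s.+1%:R - Num.sqrt n%:R / 2) * (- ln th)); last by ring.
  apply: mulr_ge0; lra.
rewrite (_ : 2 * C0 * th ^+ s = 2 * C0 / th * th ^+ s.+1); last first.
  by rewrite exprS mulrA divfK // gt_eqF.
apply: ler_wpM2l hexp.
apply: divr_ge0; [apply: mulr_ge0; [by []|exact: ltW]|exact: ltW].
Qed.
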